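(* Let $S$ be any set of $\omega$-sharing groups and let $\{x_1/t_1\}\cup\theta$ be an idempotent substitution, where $\theta$ is an idempotent substitution with $x_1\notin\mathrm{dom}(\theta)$. Then \[ \mathrm{mgu_p}(S,\{x_1/t_1\}\cup\theta)=\mathrm{mgu_p}\bigl(\mathrm{mgu_p}(S,\{x_1/t_1\}),\theta\bigr). \]
   Context: Fix a first-order signature and a denumerable set of variables $\mathcal V$. For a term $t$ and variable $v$, $\mathit{occ}(v,t)$ is the number of occurrences of $v$ in $t$. An $\omega$-sharing group is a multiset of variables with finite support, i.e. a function $B:\mathcal V\to\mathbb N$ that is nonzero on only finitely many variables; $\{\!\!\{\}\!\!\}$ is the empty multiset, and the sum of multisets is $(A\uplus B)(v)=A(v)+B(v)$. The multiplicity of an $\omega$-sharing group $B$ in a term $t$ is $\chi(B,t)=\sum_{v} B(v)\cdot\mathit{occ}(v,t)$. A multigraph $G=\langle N_G,E_G,\mathrm{src}_G,\mathrm{tgt}_G\rangle$ consists of a nonempty set of nodes $N_G$, a set of edges $E_G$, and functions $\mathrm{src}_G,\mathrm{tgt}_G:E_G\to N_G$ (multiple distinct edges, including self-loops, may join the same nodes). The out-degree (in-degree) of $n$ is the number of edges $e$ with $\mathrm{src}_G(e)=n$ (resp. $\mathrm{tgt}_G(e)=n$). A path between $n_1$ and $n_k$ is a nonempty sequence of nodes $n_1\dots n_k$ such that consecutive nodes are joined by an edge in either direction; $G$ is connected if every pair of nodes is joined by a path. A (parallel) sharing graph for a set $S$ of $\omega$-sharing groups and an idempotent substitution $\theta=\{x_1/t_1,\dots,x_p/t_p\}$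 (with $p\ge 0$) is a family $\mathcal G=\{G^i\}_{i\in[1,p]}$ of multigraphs over a common node set $N_{\mathcal G}$, with a labeling $l_{\mathcal G}:N_{\mathcal G}\to S$, such that: (i) for every node $n$ and every $i$, the out-degree of $n$ in $G^i$ equals $\chi(l_{\mathcal G}(n),x_i)$ and the in-degree of $n$ in $G^i$ equals $\chi(l_{\mathcal G}(n),t_i)$; (ii) the edge sets $E_{G^i}$ are pairwise disjoint; (iii) the flattening of $\mathcal G$, i.e. the multigraph with nodes $N_{\mathcal G}$, edges $\bigcup_i E_{G^i}$ and source/target inherited from the layers, is connected. The resultant $\omega$-sharing group is $\mathit{res}(\mathcal G)=\biguplus_{n\in N_{\mathcal G}} l_{\mathcal G}(n)$. The parallel abstract unification is $\mathrm{mgu_p}(S,\theta)=\{\mathit{res}(\mathcal G)\mid \mathcal G \text{ a sharing graph for } S \text{ and } \theta\}$. (When $\theta=\epsilon$ is empty, $p=0$ and $\mathrm{mgu_p}(S,\epsilon)=S$.) *)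

(* Defs.v *)
From mathcomp Require Import all_boot.
Set Implicit Arguments. Unset Strict Implicit. Unset Printing Implicit Defensive.

Inductive term (F : Type) : Type :=
| Var of nat
| Fun of F & seq (term F).
Arguments Var {F} _.

Section Terms.
Variable F : Type.

Fixpoint wf_term (ar : F -> nat) (t : term F) : bool :=
  match t with
  | Var _ => true
  | Fun f ts => (size ts == ar f) && all (wf_term ar) ts
  end.

Fixpoint occ (v : nat) (t : term F) : nat :=
  match t with
  | Var w => (w == v) : nat
  | Fun _ ts => sumn (map (occ v) ts)
  end.

Fixpoint vars (t : term F) : seq nat :=
  match t with
  | Var w => [:: w]
  | Fun _ ts => flatten (map vars ts)
  end.
End Terms.

(* omega-sharing groups: multisets of variables, i.e. functions V -> nat
   with finite support. *)
Definition osg := nat -> nat.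
Definition fin_supp (B : osg) : Prop := exists N, forall v, N <= v -> B v = 0.

(* chi(B,t) = sum_v B(v) * occ(v,t); the sum is over the (finitely many)
   variables of t, since occ(v,t) = 0 for all other v. *)
Definition chi (F : Type) (B : osg) (t : term F) : nat :=
  \sum_(v <- undup (vars t)) B v * occ v t.

(* A substitution {x1/t1,...,xp/tp} as the list of its bindings (x_i, t_i). *)
Definition subst (F : Type) := seq (nat * term F).
Definition dom (F : Type) (s : subst F) : seq nat := map fst s.

Definition idem_subst (F : Type) (s : subst F) : Prop :=
  uniq (dom s) /\
  forall x, x \in dom s -> all (fun t => occ x t == 0) (map snd s).

Definition wf_subst (F : Type) (ar : F -> nat) (s : subst F) : Prop :=
  all (wf_term ar) (map snd s).

(* A parallel sharing graph for a substitution with p = size s bindings: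
   a common finite node set, and a family of p multigraphs given as one
   finite type of edges partitioned into layers (layer e = i means that e
   is an edge of G^i); thus the edge sets of distinct layers are disjoint
   and the flattening has all edges. *)
Record pgraph (p : nat) := PGraph {
  node : finType;
  edge : finType;
  layer : edge -> 'I_p;
  src : edge -> node;
  tgt : edge -> node;
  lab : node -> osg
}.

Section SharingGraph.
Variable F : Type.

Definition outdeg p (G : pgraph p) (i : 'I_p) (n : node G) : nat :=
  #|[set e : edge G | (layer e == i) && (src e == n)]|.
Definition indeg p (G : pgraph p) (i : 'I_p) (n : node G) : nat :=
  #|[set e : edge G | (layer e == i) && (tgt e == n)]|.

Definition adj p (G : pgraph p) : rel (node G) :=
  fun n m => [exists e : edge G,
     ((src e == n) && (tgt e == m)) || ((src e == m) && (tgt e == n))].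

Definition connected p (G : pgraph p) : Prop :=
  forall n m : node G, exists l : seq (node G),
    path (@adj p G) n l /\ last n l = m.

Definition is_sharing_graph (S : osg -> Prop) (s : subst F)
    (G : pgraph (size s)) : Prop :=
  [/\ exists n : node G, True,
      forall n : node G, S (lab n),
      forall (i : 'I_(size s)) (n : node G),
        outdeg i n = chi (lab n) (@Var F (nth (0, Var 0) s i).1) /\
        indeg i n = chi (lab n) (nth (0, Var 0) s i).2
    & connected G].

Definition res p (G : pgraph p) : osg := fun v => \sum_(n : node G) lab n v.

Definition mgu_p (S : osg -> Prop) (s : subst F) : osg -> Prop :=
  fun B => exists G : pgraph (size s), is_sharing_graph S G /\ res G = B.
End SharingGraph.

(* Main.v *)
Require Import Defs.
From mathcomp Require Import all_boot.
From Stdlib Require Import FunctionalExtensionality.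
Set Implicit Arguments. Unset Strict Implicit. Unset Printing Implicit Defensive.

Lemma chi_sum (F : Type) (I : finType) (P : pred I) (f : I -> osg) (t : term F) :
  chi (fun v => \sum_(i | P i) f i v) t = \sum_(i | P i) chi (f i) t.
Proof.
rewrite /chi; under eq_bigr do rewrite big_distrl; exact: exchange_big.
Qed.

Lemma connectedP p (G : pgraph p) :
  connected G <-> forall n m, connect (@adj p G) n m.
Proof.
split=> [H n m|H n m].
  by have [l [pl lm]] := H n m; apply/connectP; exists l.
by have /connectP[l pl lm] := H n m; exists l.
Qed.

Lemma connect_map (T U : finType) (e1 : rel T) (e2 : rel U) (h : T -> U) x y :
  (forall a b, e1 a b -> e2 (h a) (h b)) -> connect e1 x y -> connect e2 (h x) (h y).
Proof.
move=> He /connectP[l pl ->]; elim: l x pl => //= z l IH x /andP[exz /IH].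
by apply: connect_trans; apply: connect1; apply: He.
Qed.

Lemma tagged_eq (I : eqType) (J : I -> eqType) (a n : I) (Fa : forall i, J i) (y : J n) :
  (Tagged J (Fa a) == Tagged J y) = (a == n) && (Fa n == y).
Proof.
case: (eqVneq a n) => [->|ne]; first by rewrite eq_Tagged.
by apply/eqP => /(congr1 tag) /= E; rewrite E eqxx in ne.
Qed.

Lemma tag_neq (I : eqType) (J : I -> eqType) (a n : I) (x : J a) (y : J n) :
  a != n -> (Tagged J x == Tagged J y) = false.
Proof. by move=> ne; apply/eqP => /(congr1 tag) /= E; rewrite E eqxx in ne. Qed.
Lemma distrib (T K : finType) (P : pred T) (d : K -> nat) : (exists k0 : K, True) ->
  \sum_(x | P x) 1 = \sum_k d k ->
  exists f : T -> K, forall k, \sum_(x | P x && (f x == k)) 1 = d k.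
Proof.
case=> k0 _.
move Hn: (\sum_k d k) => n; elim: n P d Hn => [|n IH] P d Hd HP.
  exists (fun _ => k0) => k.
  have P0 x : P x = false.
    apply/negbTE/negP => Px; move: HP; rewrite (bigD1 x) //=.
  have /eqP := Hd; rewrite sum_nat_eq0 => /forallP /(_ k) /implyP /(_ isT) /eqP ->.
  by rewrite big_pred0 // => x; rewrite P0.
have [k1 dk1] : exists k1, 0 < d k1.
  case: (pickP (fun k => 0 < d k)) => [k1 dk1|H0]; first by exists k1.
  by move: Hd; rewrite big1 // => k _; move: (H0 k) => /= /negbT; rewrite lt0n negbK => /eqP.
have [x1 Px1] : exists x1, P x1.
  case: (pickP P) => [x1 Px1|H0]; first by exists x1.
  by move: HP; rewrite big_pred0.
pose P' := [pred x | P x && (x != x1)].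
pose d' := fun k => if k == k1 then (d k).-1 else d k.
have HP' : \sum_(x | P' x) 1 = n.
  by move: HP; rewrite (bigD1 x1) //= add1n => -[].
have Hd' : \sum_k d' k = n.
  rewrite (bigD1 k1) //= {1}/d' eqxx.
  rewrite (eq_bigr (fun k => d k)); last by move=> k /negbTE ne; rewrite /d' ne.
  move: Hd; rewrite (bigD1 k1) //=.
  by rewrite -{1}(prednK dk1) addSn => -[].
have [f' Hf'] := IH P' d' Hd' HP'.
exists (fun x => if x == x1 then k1 else f' x) => k.
have H := Hf' k.
rewrite (big_mkcond (fun x => P' x && _)) (bigD1 x1) //= eqxx andbF add0n in H.
rewrite (big_mkcond (fun x => P x && _)) (bigD1 x1) //= eqxx Px1 /=.
rewrite (eq_bigr (fun x => if P' x && (f' x == k) then 1 else 0)); last first.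
  by move=> x /negbTE ne; rewrite /P' /= ne andbT.
rewrite H /d'; case: (eqVneq k k1) => [->|ne]; last by [].
by rewrite add1n prednK.
Qed.

Lemma sum_sigT (I : finType) (J : I -> finType) (F : {i : I & J i} -> nat) :
 \sum_(a : {i : I & J i}) F a = \sum_i \sum_(j : J i) F (Tagged J j).
Proof.
rewrite (sig_big_dep xpredT (fun _ _ => true) (fun i j => F (Tagged J j))) /=.
by apply: eq_bigr => -[i j].
Qed.

Definition BG p (G : pgraph p) (Hf : node G -> pgraph 1)
  (f g : forall x : 'I_p * node G, edge G -> node (Hf x.2)) : pgraph p.+1 :=
 @PGraph p.+1 {n : node G & node (Hf n)} ({n : node G & edge (Hf n)} + edge G)%type
   (fun e => match e with inl _ => ord0 | inr e => lift ord0 (layer e) end)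
   (fun e => match e with
             | inl a => Tagged (fun n => node (Hf n)) (src (tagged a))
             | inr e => Tagged (fun n => node (Hf n)) (f (layer e, src e) e) end)
   (fun e => match e with
             | inl a => Tagged (fun n => node (Hf n)) (tgt (tagged a))
             | inr e => Tagged (fun n => node (Hf n)) (g (layer e, tgt e) e) end)
   (fun u => lab (tagged u)).
Lemma BG_deg (F : Type) (S : osg -> Prop) x1 t1 (θ : subst F) (G : pgraph (size θ))
  (Hf : node G -> pgraph 1) (f g : forall x : 'I_(size θ) * node G, edge G -> node (Hf x.2)) :
  (forall n, @is_sharing_graph F S [:: (x1, t1)] (Hf n)) ->
  (forall x k, \sum_(e | ((layer e == x.1) && (src e == x.2)) && (f x e == k)) 1
      = chi (lab k) (@Var F (nth (0, Var 0) θ x.1).1)) ->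
  (forall x k, \sum_(e | ((layer e == x.1) && (tgt e == x.2)) && (g x e == k)) 1
      = chi (lab k) (nth (0, Var 0) θ x.1).2) ->
  forall (i : 'I_(size ((x1, t1) :: θ))) (u : node (BG f g)),
        outdeg i u = chi (lab u) (@Var F (nth (0, Var 0) ((x1, t1) :: θ) i).1) /\
        indeg i u = chi (lab u) (nth (0, Var 0) ((x1, t1) :: θ) i).2.
Proof.
move=> HH Hfs Hgs i [n k].
rewrite /outdeg /indeg -!sum1dep_card !big_sumType /=.
case: (unliftP ord0 i) => [j ->|->].
  rewrite (negbTE (neq_lift _ _)) /= !big_pred0_eq !add0n /=.
  split.
    rewrite -(Hfs (j, n) k); apply: eq_bigl => e /=.
    rewrite (inj_eq (@lift_inj _ ord0)) (tagged_eq _ (fun a => f (layer e, a) e)).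
    by case: (eqVneq (layer e) j) => [->|] //=; rewrite andbA.
  rewrite -(Hgs (j, n) k); apply: eq_bigl => e /=.
  rewrite (inj_eq (@lift_inj _ ord0)) (tagged_eq _ (fun a => g (layer e, a) e)).
  by case: (eqVneq (layer e) j) => [->|] //=; rewrite andbA.
rewrite eqxx /=.
case: (HH n) => _ _ Hdeg _; case: (Hdeg ord0 k) => <- <-.
rewrite !big_pred0_eq !addn0.
rewrite /outdeg /indeg -!sum1dep_card.
split; rewrite big_mkcond sum_sigT (bigD1 n) //= [X in _ + X]big1 ?addn0;
  try by move=> n' ne; apply: big1 => e _; rewrite tag_neq.
  by rewrite [RHS]big_mkcond; apply: eq_bigr => e _; rewrite eq_Tagged /= ord1 eqxx.
by rewrite [RHS]big_mkcond; apply: eq_bigr => e _; rewrite eq_Tagged /= ord1 eqxx.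
Qed.

Lemma BG_conn p (G : pgraph p) (Hf : node G -> pgraph 1)
  (f g : forall x : 'I_p * node G, edge G -> node (Hf x.2)) :
  (forall n, connected (Hf n)) -> connected G -> connected (BG f g).
Proof.
move=> Hc HG; apply/connectedP.
pose T := fun n => node (Hf n).
have same (u v : node (BG f g)) : tag u = tag v -> connect (@adj _ (BG f g)) u v.
  case: u => n k; case: v => n' k' /= E; subst n'.
  have /connectedP H := Hc n.
  apply: (connect_map (h := fun k => Tagged T k)) (H k k') => a b /existsP [e He].
  apply/existsP; exists (inl (Tagged (fun n => edge (Hf n)) e)).
  by rewrite /= !eq_Tagged.
have step (u v : node (BG f g)) (e : edge G) : tag u = src e -> tag v = tgt e ->
    connect (@adj _ (BG f g)) u v /\ connect (@adj _ (BG f g)) v u.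
  move=> Eu Ev.
  pose w1 : node (BG f g) := Tagged T (f (layer e, src e) e).
  pose w2 : node (BG f g) := Tagged T (g (layer e, tgt e) e).
  have a12 : @adj _ (BG f g) w1 w2 by apply/existsP; exists (inr e); rewrite !eqxx.
  have a21 : @adj _ (BG f g) w2 w1 by apply/existsP; exists (inr e); rewrite !eqxx orbT.
  split.
    apply: connect_trans (same u w1 Eu) _.
    by apply: connect_trans (connect1 a12) (same w2 v (esym Ev)).
  apply: connect_trans (same v w2 Ev) _.
  by apply: connect_trans (connect1 a21) (same w1 u (esym Eu)).
move=> u v; have /connectedP HG' := HG.
move: (HG' (tag u) (tag v)) => /connectP [l pl El].
elim: l u pl El => [|m l IH] u /=; first by move=> _ E; apply: same.
case/andP => /existsP [e /orP [/andP [/eqP s /eqP t] | /andP [/eqP s /eqP t]]] pl El.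
  pose w : node (BG f g) := Tagged T (g (layer e, tgt e) e).
  apply: connect_trans (step u w e (esym s) erefl).1 _.
  by apply: IH; rewrite /= t.
pose w : node (BG f g) := Tagged T (f (layer e, src e) e).
apply: connect_trans (step w u e erefl (esym t)).2 _.
by apply: IH; rewrite /= s.
Qed.

Lemma dir2 (F : Type) (S : osg -> Prop) x1 t1 (θ : subst F) B :
  mgu_p (mgu_p S [:: (x1, t1)]) θ B -> mgu_p S ((x1, t1) :: θ) B.
Proof.
case=> G [[[n0 _] Hlab Hdeg Hcon] HB].
have [Hf HHf] := fin_all_exists Hlab.
have inh n : exists k : node (Hf n), True.
  by case: (HHf n) => [[[k _] _ _ _] _]; exists k.
have Hf_f : forall x : 'I_(size θ) * node G, exists fx : edge G -> node (Hf x.2),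
    forall k, \sum_(e | ((layer e == x.1) && (src e == x.2)) && (fx e == k)) 1
       = chi (lab k) (@Var F (nth (0, Var 0) θ x.1).1).
  case=> i n /=; apply: distrib => //.
  case: (Hdeg i n) => + _; rewrite /outdeg -sum1dep_card => ->.
  by case: (HHf n) => _ <-; rewrite /res chi_sum.
have Hg_f : forall x : 'I_(size θ) * node G, exists fx : edge G -> node (Hf x.2),
    forall k, \sum_(e | ((layer e == x.1) && (tgt e == x.2)) && (fx e == k)) 1
       = chi (lab k) (nth (0, Var 0) θ x.1).2.
  case=> i n /=; apply: distrib => //.
  case: (Hdeg i n) => _; rewrite /indeg -sum1dep_card => ->.
  by case: (HHf n) => _ <-; rewrite /res chi_sum.
have [f Hfs] := fin_all_exists Hf_f.
have [g Hgs] := fin_all_exists Hg_f.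
exists (BG f g); split.
  split.
  - by case: (inh n0) => k0 _; exists (Tagged (fun n => node (Hf n)) k0).
  - by case=> n k /=; case: (HHf n) => [[_ Hl _ _] _]; exact: Hl.
  - exact: (@BG_deg F S x1 t1 θ G Hf f g (fun n => (HHf n).1) Hfs Hgs).
  - by apply: BG_conn => // n; case: (HHf n) => [[]].
rewrite -HB; apply: functional_extensionality => v.
rewrite /res sum_sigT /=; apply: eq_bigr => n _.
by case: (HHf n) => _ <-.
Qed.
Definition r0 p (G : pgraph p.+1) : rel (node G) := fun a b =>
  [exists e : edge G, (layer e == ord0) &&
     (((src e == a) && (tgt e == b)) || ((src e == b) && (tgt e == a)))].
Arguments r0 {p} G.

Lemma r0_sym p (G : pgraph p.+1) : connect_sym (r0 G).
Proof.
apply: sym_connect_sym => a b; apply/existsP/existsP => -[e He]; exists e;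
  by rewrite orbC.
Qed.

Definition comp_t p (G : pgraph p.+1) : finType := {n : node G | root (r0 G) n == n}.

Definition compof p (G : pgraph p.+1) (n : node G) : comp_t G :=
  exist _ (root (r0 G) n) (roots_root (@r0_sym p G) n).

Definition Hn p (G : pgraph p.+1) (c : comp_t G) : finType :=
  {m : node G | root (r0 G) m == val c}.
Definition He p (G : pgraph p.+1) (c : comp_t G) : finType :=
  {e : edge G | (layer e == ord0) && (root (r0 G) (src e) == val c)}.
Definition Hd p (G : pgraph p.+1) (c : comp_t G) : Hn c := exist _ (val c) (valP c).

Definition Hsub p (G : pgraph p.+1) (c : comp_t G) : pgraph 1 :=
  @PGraph 1 (Hn c) (He c) (fun _ => ord0)
    (fun e => insubd (Hd c) (src (val e))) (fun e => insubd (Hd c) (tgt (val e)))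
    (fun m => lab (val m)).

Definition K p (G : pgraph p.+1) : pgraph p :=
  @PGraph p (comp_t G) {x : 'I_p * edge G | layer x.2 == lift ord0 x.1}
    (fun x => (val x).1) (fun x => compof (src (val x).2)) (fun x => compof (tgt (val x).2))
    (fun c => res (Hsub c)).

Lemma sum_sub (T : finType) (Q P : pred T) (F : T -> nat) :
  \sum_(x : {x | Q x} | P (val x)) F (val x) = \sum_(x | Q x && P x) F x.
Proof. by rewrite (big_sub_cond Q P F). Qed.

Lemma root_layer0 p (G : pgraph p.+1) (e : edge G) :
  layer e == ord0 -> root (r0 G) (src e) = root (r0 G) (tgt e).
Proof.
move=> h; apply/(rootP (@r0_sym p G))/connect1/existsP; exists e.
by rewrite h !eqxx.
Qed.

Lemma compof_val p (G : pgraph p.+1) (c : comp_t G) : compof (val c) = c.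
Proof. by apply: val_inj; rewrite /= (eqP (valP c)). Qed.

Lemma insubd_eq p (G : pgraph p.+1) (c : comp_t G) (m : Hn c) (x : node G) :
  (root (r0 G) x == val c) && (insubd (Hd c) x == m) = (x == val m).
Proof.
case h: (root (r0 G) x == val c) => /=.
  by rewrite -val_eqE val_insubd h.
apply/esym/negbTE/eqP => E; move: h; by rewrite E (valP m).
Qed.

Lemma Hsub_sg (F : Type) (S : osg -> Prop) x1 t1 (θ : subst F)
  (G : pgraph (size θ).+1) (c : comp_t G) :
  @is_sharing_graph F S ((x1, t1) :: θ) G -> @is_sharing_graph F S [:: (x1, t1)] (Hsub c).
Proof.
case=> _ Hlab Hdeg _; split.
- by exists (Hd c).
- by move=> m; apply: Hlab.
- move=> i m; rewrite (ord1 i); case: (Hdeg ord0 (val m)) => /= <- <-.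
  rewrite /outdeg /indeg -!sum1dep_card /=.
  pose Q := fun e : edge G => (layer e == ord0) && (root (r0 G) (src e) == val c).
  rewrite (sum_sub Q (fun e => insubd (Hd c) (src e) == m) (fun _ => 1)).
  rewrite (sum_sub Q (fun e => insubd (Hd c) (tgt e) == m) (fun _ => 1)).
  split; apply: eq_bigl => e; rewrite /Q -andbA.
    by rewrite insubd_eq.
  case l0: (layer e == ord0) => //=.
  by rewrite (root_layer0 l0) insubd_eq.
- apply/connectedP => m m'.
  have : connect (r0 G) (val m) (val m').
    by rewrite -(root_connect (@r0_sym _ G)) (eqP (valP m)) (eqP (valP m')).
  case/connectP => l pl El.
  suff H : forall a, root (r0 G) a == val c -> path (r0 G) a l ->
      connect (@adj _ (Hsub c)) (insubd (Hd c) a) (insubd (Hd c) (last a l)).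
    have := H (val m) (valP m) pl; rewrite -El.
    have E (z : Hn c) : insubd (Hd c) (val z) = z.
      by apply: val_inj; rewrite val_insubd (valP z).
    by rewrite !E.
  elim: l {El pl} => [|b l IH] a ha //=.
  case/andP => /existsP [e /andP [l0 Hor]] pl.
  have rse := root_layer0 l0.
  have hb : root (r0 G) b == val c.
    by case/orP: Hor => /andP [/eqP s /eqP t]; subst; rewrite ?rse // -rse.
  apply: connect_trans (IH b hb pl); apply: connect1; apply/existsP.
  have pe : (layer e == ord0) && (root (r0 G) (src e) == val c).
    by rewrite l0 /=; case/orP: Hor => /andP [/eqP s _]; rewrite s.
  exists (exist _ e pe : He c) => /=.
  by case/orP: Hor => /andP [/eqP -> /eqP ->]; rewrite !eqxx ?orbT.
Qed.

Lemma K_sum p (G : pgraph p.+1) (c : comp_t G) (ep : edge G -> node G) (i : 'I_p) :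
  \sum_(x : {x : 'I_p * edge G | layer x.2 == lift ord0 x.1} |
          ((val x).1 == i) && (compof (ep (val x).2) == c)) 1 =
  \sum_(m : Hn c) \sum_(e | (layer e == lift ord0 i) && (ep e == val m)) 1.
Proof.
rewrite (sum_sub (fun x : 'I_p * edge G => layer x.2 == lift ord0 x.1)
   (fun x => (x.1 == i) && (compof (ep x.2) == c)) (fun _ => 1)).
rewrite big_mkcond -(pair_bigA _ (fun j e =>
   if (layer e == lift ord0 j) && ((j == i) && (compof (ep e) == c)) then 1 else 0)).
rewrite (bigD1 i) //= [X in _ + X]big1 ?addn0; last first.
  by move=> j /negbTE ne; apply: big1 => e _; rewrite ne andbF.
rewrite eqxx -big_mkcond /=.
rewrite (partition_big (fun e => insubd (Hd c) (ep e)) xpredT) //=.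
apply: eq_bigr => m _; apply: eq_bigl => e.
by rewrite -andbA -val_eqE /= insubd_eq.
Qed.

Lemma dir1 (F : Type) (S : osg -> Prop) x1 t1 (θ : subst F) B :
  mgu_p S ((x1, t1) :: θ) B -> mgu_p (mgu_p S [:: (x1, t1)]) θ B.
Proof.
case=> G [Hsg HB]; have [[n0 _] Hlab Hdeg Hcon] := Hsg.
exists (K G); split; last first.
  rewrite -HB; apply: functional_extensionality => v; rewrite /res /=.
  rewrite [RHS](partition_big (fun n => compof n) xpredT) //=.
  apply: eq_bigr => c _.
  transitivity (\sum_(m | (root (r0 G) m == val c) && xpredT m) lab m v).
    exact: (sum_sub (fun m => root (r0 G) m == val c) xpredT (fun m => lab m v)).
  by apply: eq_bigl => m; rewrite andbT -val_eqE.
split.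
- by exists (compof n0).
- by move=> c; exists (Hsub c); split => //; exact: Hsub_sg.
- move=> i c; rewrite /outdeg /indeg -!sum1dep_card /=.
  rewrite (K_sum c (fun e => src e) i) (K_sum c (fun e => tgt e) i) /= !chi_sum.
  split; apply: eq_bigr => m _.
    by case: (Hdeg (lift ord0 i) (val m)) => + _; rewrite /outdeg -sum1dep_card.
  by case: (Hdeg (lift ord0 i) (val m)) => _; rewrite /indeg -sum1dep_card.
- apply/connectedP => c c'; have /connectedP HG := Hcon.
  move/connectP: (HG (val c) (val c')) => [l pl El].
  rewrite -(compof_val c) -(compof_val c') El.
  elim: l (val c) pl {El} => [|b l IH] a //= /andP [/existsP [e Hor] pl].
  apply: connect_trans (IH b pl).
  case: (unliftP ord0 (layer e)) => [j lj|l0].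
    apply: connect1; apply/existsP.
    have pe : layer e == lift ord0 j by rewrite lj.
    exists (exist (fun x : 'I_(size θ) * edge G => layer x.2 == lift ord0 x.1) (j, e) pe) => /=.
    by case/orP: Hor => /andP [/eqP -> /eqP ->]; rewrite !eqxx ?orbT.
  have E : compof a = compof b.
    apply: val_inj => /=; have := root_layer0 (introT eqP l0).
    by case/orP: Hor => /andP [/eqP -> /eqP ->].
  by rewrite E.
Qed.

Theorem lemma1 (F : Type) (ar : F -> nat) (S : osg -> Prop)
  (x1 : nat) (t1 : term F) (theta : subst F) :
  (forall B, S B -> fin_supp B) ->
  wf_term ar t1 -> wf_subst ar theta ->
  idem_subst theta ->
  x1 \notin dom theta ->
  idem_subst ((x1, t1) :: theta) ->
  forall B : osg,
    mgu_p S ((x1, t1) :: theta) B <->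
    mgu_p (mgu_p S [:: (x1, t1)]) theta B.
Proof.
move=> _ _ _ _ _ _ B; split; [exact: dir1 | exact: dir2].
Qed.
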